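(* Let $p,q$ be integers with $1+|p|<|q|$. Then $\mathrm{Dom}_{p,q}$ is a regular language, and $\psi_{p,q}:\mathrm{Dom}_{p,q}\to\mathbb{Z}^2$ is an FA-presentation of $(\mathbb{Z}^2,+)$, i.e. the relation $\{(u,v,w)\in\mathrm{Dom}_{p,q}^3:\psi_{p,q}(u)+\psi_{p,q}(v)=\psi_{p,q}(w)\}$ is FA-recognizable. Moreover, if $\gcd(p,q)=1$, then neither of the languages $\psi_{p,q}^{-1}(\langle\xi\rangle)$, $\psi_{p,q}^{-1}(\langle\eta\rangle)$ is regular, and neither of the relations $\{(u,v):\psi_{p,q}(v)=\pi_\xi(\psi_{p,q}(u))\}$, $\{(u,v):\psi_{p,q}(v)=\pi_\eta(\psi_{p,q}(u))\}$ is FA-recognizable, where $\pi_\xi,\pi_\eta:\mathbb{Z}^2\to\mathbb{Z}^2$ are the projections $[sx+r]_\sim\mapsto[r]_\sim$ and $[sx+r]_\sim\mapsto[sx]_\sim$ onto the components of $\mathbb{Z}^2=\langle\eta\rangle\oplus\langle\xi\rangle$.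
   Context: Let $p,q$ be integers with $1+|p|<|q|$ and $t(x)=x^2+px-q$. For $f,g\in\mathbb{Z}[x]$ write $f\sim g$ if $t$ divides $f-g$; identify $\mathbb{Z}^2$ with the additive group of $\mathbb{Z}[x]/\langle t\rangle$ via $(h_1,h_2)\mapsto[h_1x+h_2]_\sim$, and put $\eta=[x]_\sim$, $\xi=[1]_\sim$. A polynomial $\sum a_ix^i$ is reduced if $|a_i|<|q|$ for all $i$. Let $\Sigma_q=\{-(|q|-1),\dots,|q|-1\}$ with the order $-(|q|-1)<\dots<|q|-1$; a string $a_0a_1\dots a_n\in\Sigma_q^*$ represents the reduced polynomial $a_nx^n+\dots+a_1x+a_0$, and two strings are equivalent if their polynomials are $\sim$-equivalent. $\mathrm{Dom}_{p,q}$ is the set of $w\in\Sigma_q^*$ such that no string $u$ strictly smaller than $w$ in the length-lexicographic order on $\Sigma_q^*$ is equivalent to $w$, and $\psi_{p,q}:\mathrm{Dom}_{p,q}\to\mathbb{Z}^2$ sends $w$ to the $\sim$-class of the polynomial it represents. For strings $w_1,\dots,w_m$ over an alphabet $\Sigma$, their convolution $w_1\otimes\dots\otimes w_m$ is the string over $(\Sigma\cup\{\diamond\})^m$ of length $\max|w_i|$ whose $k$-th letter is the column $(\sigma_1,\dots,\sigma_m)$, $\sigma_i$ being the $k$-th letter of $w_i$ if $k\le|w_i|$ and the padding symbol $\diamond$ otherwise. A relation $R\subseteq(\Sigma^* )^m$ is FA-recognizable if $\{w_1\otimes\dots\otimes w_m:(w_1,\dots,w_m)\in R\}$ is accepted by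 a finite automaton; a function is FA-recognizable if its graph is. *)

(* Defs.v *)
From HB Require Import structures.
From mathcomp Require Import all_boot all_order all_algebra.
Set Implicit Arguments. Unset Strict Implicit. Unset Printing Implicit Defensive.
Import Order.TTheory GRing.Theory Num.Theory.
Local Open Scope ring_scope.

Record dfa (A : finType) := DFA {
  dstate : finType;
  dstart : dstate;
  dstep : dstate -> A -> dstate;
  dfinal : pred dstate }.

Definition accepts (A : finType) (D : dfa A) (w : seq A) : bool :=
  @dfinal A D (foldl (@dstep A D) (@dstart A D) w).

Definition regular (A : finType) (L : seq A -> Prop) : Prop :=
  exists D : dfa A, forall w, accepts D w <-> L w.

(* Convolution of m strings: letters are columns in (A + diamond)^m,
   with diamond represented by None. *)
Definition conv (A : finType) (m : nat) (ws : 'I_m -> seq A)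
  : seq {ffun 'I_m -> option A} :=
  mkseq (fun k => [ffun i => onth (ws i) k]) (\max_(i < m) size (ws i))%N.

Definition FA_recognizable (A : finType) (m : nat) (R : ('I_m -> seq A) -> Prop)
  : Prop :=
  exists D : dfa {ffun 'I_m -> option A},
    forall x, accepts D x <-> exists ws, R ws /\ x = conv ws.

Definition i2_0 : 'I_2 := @Ordinal 2 0 isT.
Definition i2_1 : 'I_2 := @Ordinal 2 1 isT.
Definition i3_0 : 'I_3 := @Ordinal 3 0 isT.
Definition i3_1 : 'I_3 := @Ordinal 3 1 isT.
Definition i3_2 : 'I_3 := @Ordinal 3 2 isT.

(* Sigma_q = {-(|q|-1), ..., |q|-1}; the letter i : 'I_(2|q|-1) stands for
   the integer i - (|q|-1), so the order on letters is the order on ordinals. *)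
Definition Sigma (q : int) : finType := 'I_(2 * absz q - 1).

Definition letv (q : int) (a : Sigma q) : int :=
  (nat_of_ord a)%:Z - ((absz q)%:Z - 1).

(* the reduced polynomial a_n x^n + ... + a_0 represented by a_0 a_1 ... a_n *)
Definition poly_of (q : int) (w : seq (Sigma q)) : {poly int} :=
  Poly (map (@letv q) w).

Definition tpoly (p q : int) : {poly int} := 'X^2 + p%:P * 'X - q%:P.

Definition sim (p q : int) (f g : {poly int}) : Prop :=
  exists h : {poly int}, f - g = h * tpoly p q.

Fixpoint lex_lt (n : nat) (u w : seq 'I_n) : bool :=
  match u, w with
  | a :: u', b :: w' => (nat_of_ord a < nat_of_ord b)%N ||
                        ((a == b) && lex_lt u' w')
  | [::], _ :: _ => true
  | _, _ => false
  end.

Definition llex_lt (n : nat) (u w : seq 'I_n) : bool :=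
  (size u < size w)%N || ((size u == size w) && lex_lt u w).

Definition Dom (p q : int) (w : seq (Sigma q)) : Prop :=
  forall u : seq (Sigma q), llex_lt u w -> ~ sim p q (poly_of u) (poly_of w).

(* Z^2 identified with Z[x]/<t> via (h1,h2) |-> [h1 x + h2]: psi w is the pair
   (h1,h2) with poly_of w ~ h1 x + h2, computed as the remainder of division
   by the monic polynomial t. *)
Definition psi (p q : int) (w : seq (Sigma q)) : int * int :=
  let r := Pdiv.Ring.rmodp (poly_of w) (tpoly p q) in (r`_1, r`_0).

Arguments psi p q w : clear implicits.
Arguments Dom p q w : clear implicits.

Definition addZ2 (a b : int * int) : int * int := (a.1 + b.1, a.2 + b.2).

(* eta = [x] = (1,0), xi = [1] = (0,1) *)
Definition in_xi (a : int * int) : Prop := a.1 = 0.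
Definition in_eta (a : int * int) : Prop := a.2 = 0.
Definition pi_xi (a : int * int) : int * int := (0, a.2).
Definition pi_eta (a : int * int) : int * int := (a.1, 0).

Definition add_rel (p q : int) (ws : 'I_3 -> seq (Sigma q)) : Prop :=
  [/\ Dom p q (ws i3_0), Dom p q (ws i3_1), Dom p q (ws i3_2) &
      addZ2 (psi p q (ws i3_0)) (psi p q (ws i3_1)) = psi p q (ws i3_2)].

Arguments add_rel p q ws : clear implicits.

Definition proj_rel (p q : int) (pi : int * int -> int * int)
  (ws : 'I_2 -> seq (Sigma q)) : Prop :=
  [/\ Dom p q (ws i2_0), Dom p q (ws i2_1) &
      psi p q (ws i2_1) = pi (psi p q (ws i2_0))].
Arguments proj_rel p q pi ws : clear implicits.

(* Main.v *)
Require Import Defs.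
From HB Require Import structures.
From mathcomp Require Import all_boot all_order all_algebra.
From mathcomp Require Import zify ring lra.
From Stdlib Require Import Classical.
Import Order.TTheory GRing.Theory Num.Theory.
Local Open Scope ring_scope.

Set Implicit Arguments. Unset Strict Implicit. Unset Printing Implicit Defensive.


Section Model.
Variables (p q : int).

Definition mX (e : int*int) : int*int := (e.2 - p * e.1, q * e.1).
Fixpoint Vp (ds : seq int) : int*int :=
  match ds with [::] => (0,0) | d :: ds' => addZ2 (mX (Vp ds')) (0,d) end.

Lemma size_t : size (tpoly p q) = 3%N.
Proof.
rewrite /tpoly -addrA size_polyDl size_polyXn //.
rewrite (leq_ltn_trans (size_polyD _ _)) // gtn_max.
rewrite size_polyN size_polyC (leq_ltn_trans (size_polyMleq _ _)) ?size_polyX ?size_polyC;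
  by case: (p != 0); case: (q != 0).
Qed.

Lemma t_monic : tpoly p q \is monic.
Proof.
rewrite monicE /lead_coef size_t /tpoly /=.
rewrite coefB coefD coefMX coefC /=.
by rewrite coefX coefMX coefC /= subr0 addr0.
Qed.


Definition cls (f : {poly int}) := Pdiv.Ring.rmodp f (tpoly p q).
Definition pr (f : {poly int}) : int * int := ((cls f)`_1, (cls f)`_0).

Lemma size_cls f : (size (cls f) <= 2)%N.
Proof.
have := Pdiv.Ring.ltn_rmodpN0 f (monic_neq0 t_monic).
by rewrite size_t.
Qed.

Lemma cls_dec f : cls f = ((cls f)`_1)%:P * 'X + ((cls f)`_0)%:P.
Proof.
apply/polyP=> i; rewrite coefD coefMX !coefC.
case: i => [|[|i]] /=; rewrite ?mul0r ?add0r ?addr0 ?coefC //=.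
by rewrite nth_default ?(leq_trans (size_cls f)).
Qed.

Lemma rmod_small2 (h : {poly int}) (a b : int) :
  cls (h * tpoly p q + (a%:P * 'X + b%:P)) = a%:P * 'X + b%:P.
Proof.
rewrite /cls Pdiv.RingMonic.rmodp_addl_mul_small ?t_monic // size_t.
rewrite (leq_ltn_trans (size_polyD _ _)) // gtn_max size_polyC.
rewrite (leq_ltn_trans (size_polyMleq _ _)) ?size_polyX ?size_polyC /=.
all: by case: (a != 0); case: (b != 0).
Qed.

Lemma pr_of a b : pr (a%:P * 'X + b%:P) = (a, b).
Proof.
rewrite /pr -(add0r (a%:P * 'X + b%:P)) -(mul0r (tpoly p q)) rmod_small2.
by rewrite !coefD !coefMX !coefC /= add0r addr0.
Qed.

Lemma cls_eq f g : pr f = pr g -> cls f = cls g.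
Proof. by rewrite /pr => -[e1 e0]; rewrite cls_dec [RHS]cls_dec e1 e0. Qed.

Lemma pr_add f g : pr (f + g) = addZ2 (pr f) (pr g).
Proof.
by rewrite /pr /cls Pdiv.RingMonic.rmodpD ?t_monic // !coefD.
Qed.

Lemma pr_mult h : pr (h * tpoly p q) = (0, 0).
Proof. by rewrite /pr /cls Pdiv.RingMonic.rmodp_mull ?t_monic // !coef0. Qed.

Lemma pr_C d : pr d%:P = (0, d).
Proof. by rewrite -(pr_of 0 d) mul0r add0r. Qed.

Lemma pr_X f : pr (f * 'X) = mX (pr f).
Proof.
have E := Pdiv.RingMonic.rdivp_eq t_monic f.
set h := Pdiv.Ring.rdivp f (tpoly p q) in E.
rewrite -/(cls f) cls_dec in E.
set r1 := (cls f)`_1 in E *; set r0 := (cls f)`_0 in E *.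
have -> : f * 'X = (h * 'X + r1%:P) * tpoly p q + ((r0 - p * r1)%:P * 'X + (q * r1)%:P).
  rewrite E /tpoly !polyCB !polyCM; ring.
by rewrite /pr rmod_small2 !coefD !coefMX !coefC /= add0r addr0 /mX /=.
Qed.

Lemma psi_Vp w : psi p q w = Vp (map (@letv q) w).
Proof.
rewrite /psi -/(cls _) -/(pr _) /poly_of.
elim: w => [|a w IH] /=.
  by rewrite -(pr_C 0) polyC0.
by rewrite cons_poly_def pr_add pr_X pr_C IH.
Qed.

Lemma sim_pr f g : sim p q f g <-> pr f = pr g.
Proof.
split.
  move=> [h E]; have -> : f = g + h * tpoly p q by rewrite -E; ring.
  by rewrite pr_add pr_mult /addZ2 !addr0; case: (pr g).
move=> /cls_eq E.
exists (Pdiv.Ring.rdivp f (tpoly p q) - Pdiv.Ring.rdivp g (tpoly p q)).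
rewrite {1}(Pdiv.RingMonic.rdivp_eq t_monic f) {1}(Pdiv.RingMonic.rdivp_eq t_monic g).
rewrite -/(cls f) -/(cls g) E; ring.
Qed.

End Model.


Section Carry.
Variables (p q : int).
Hypothesis hpq : 1 + `|p| < `|q|.

Local Notation mX := (mX p q).
Local Notation Vp := (Vp p q).

Definition negZ2 (a : int*int) : int*int := (- a.1, - a.2).

Lemma mX_add a b : mX (addZ2 a b) = addZ2 (mX a) (mX b).
Proof. by case: a => [a1 a2]; case: b => [b1 b2]; rewrite /mX /addZ2 /=; congr pair; ring. Qed.
Lemma mX_neg a : mX (negZ2 a) = negZ2 (mX a).
Proof. by case: a => [a1 a2]; rewrite /mX /negZ2 /=; congr pair; ring. Qed.
Lemma mX0 : mX (0,0) = (0,0).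
Proof. by rewrite /mX /= !mulr0 subr0. Qed.
Lemma iter_mX_add n a b : iter n mX (addZ2 a b) = addZ2 (iter n mX a) (iter n mX b).
Proof. by elim: n => //= n ->; rewrite mX_add. Qed.
Lemma iter_mX0 n : iter n mX (0,0) = (0,0).
Proof. by elim: n => //= n ->; rewrite mX0. Qed.
Lemma iter_mX_neg n a : iter n mX (negZ2 a) = negZ2 (iter n mX a).
Proof. by elim: n => //= n ->; rewrite mX_neg. Qed.

Lemma addZ2A a b c : addZ2 a (addZ2 b c) = addZ2 (addZ2 a b) c.
Proof. by rewrite /addZ2 /= !addrA. Qed.
Lemma addZ2C a b : addZ2 a b = addZ2 b a.
Proof. by rewrite /addZ2 addrC [a.2 + _]addrC. Qed.
Lemma addZ20 a : addZ2 a (0,0) = a.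
Proof. by case: a => a b; rewrite /addZ2 /= !addr0. Qed.

Lemma Vp_cat s t : Vp (s ++ t) = addZ2 (Vp s) (iter (size s) mX (Vp t)).
Proof.
elim: s => [|d s IH] /=; first by rewrite addZ2C addZ20.
by rewrite IH mX_add /addZ2 /=; congr pair; ring.
Qed.

Lemma Vp_nseq0 k : Vp (nseq k 0) = (0,0).
Proof. by elim: k => //= k ->; rewrite mX0 /addZ2 /= addr0. Qed.

Lemma Vp_pad s k : Vp (s ++ nseq k 0) = Vp s.
Proof. by rewrite Vp_cat Vp_nseq0 iter_mX0 addZ20. Qed.

Lemma Vp_map_add (T : Type) (f g : T -> int) l :
  Vp [seq f x + g x | x <- l] = addZ2 (Vp (map f l)) (Vp (map g l)).
Proof.
elim: l => [|x l IH] /=; first by rewrite addZ20.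
rewrite IH mX_add /addZ2 /=; congr pair; ring.
Qed.

Lemma Vp_map_neg (T : Type) (f : T -> int) l :
  Vp [seq - f x | x <- l] = negZ2 (Vp (map f l)).
Proof.
elim: l => [|x l IH] /=; first by rewrite /negZ2 /= oppr0.
rewrite IH mX_neg /addZ2 /negZ2 /=; congr pair; ring.
Qed.

Definition cstep (E : int*int) (d : int) : option (int*int) :=
  if (q %| (E.2 - d))%Z then Some (((E.2 - d) %/ q)%Z, E.1 + p * ((E.2 - d) %/ q)%Z)
  else None.

Fixpoint runC (E : int*int) (ds : seq int) : option (int*int) :=
  match ds with
  | [::] => Some E
  | d :: ds' => if cstep E d is Some E' then runC E' ds' else None
  end.

Lemma q_neq0 : q != 0.
Proof. apply/eqP=> q0; move: hpq; rewrite q0 normr0; lia. Qed.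

Lemma cstep_sound E d E' : cstep E d = Some E' -> E = addZ2 (mX E') (0, d).
Proof.
rewrite /cstep; case: ifP => // dv [<-].
rewrite /mX /addZ2 /= [q * _]mulrC divzK //.
case: E dv => a b /= dv; congr pair; ring.
Qed.

Lemma cstep_complete E d Y : E = addZ2 (mX Y) (0, d) -> cstep E d = Some Y.
Proof.
case: Y => a b; rewrite /mX /addZ2 /cstep /= => ->.
have -> : (q * a + d - d) = a * q by ring.
rewrite dvdz_mull ?dvdzz // mulzK ?q_neq0 //. by rewrite /= addr0 subrK.
Qed.

Lemma runC_sound E ds F : runC E ds = Some F ->
  E = addZ2 (Vp ds) (iter (size ds) mX F).
Proof.
elim: ds E => [|d ds IH] E /=; first by move=> [->]; rewrite addZ2C addZ20.
case h: (cstep E d) => [E'|] // /IH eE.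
rewrite (cstep_sound h) eE mX_add -iterS /addZ2 /=; congr pair; ring.
Qed.

Lemma runC_complete E ds F : E = addZ2 (Vp ds) (iter (size ds) mX F) ->
  runC E ds = Some F.
Proof.
elim: ds E => [|d ds IH] E /=; first by move=> ->; rewrite addZ2C addZ20.
move=> ->.
rewrite (@cstep_complete _ d (addZ2 (Vp ds) (iter (size ds) mX F))).
  exact: IH.
by rewrite mX_add -iterS /addZ2 /=; congr pair; ring.
Qed.

Lemma runC_zero ds : runC (0,0) ds = Some (0,0) <-> Vp ds = (0,0).
Proof.
split.
  by move/runC_sound; rewrite iter_mX0 addZ20 => <-.
move=> h; apply: runC_complete; by rewrite h iter_mX0 addZ20.
Qed.

Lemma runC_zero' ds : (runC (0,0) ds == Some (0,0)) = (Vp ds == (0,0)).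
Proof. by apply/eqP/eqP; rewrite runC_zero. Qed.

Definition KK : nat := (3 * `|q|)%N.
Definition K2 : nat := ((1 + `|p|) * KK)%N.
Definition boundedE (E : int*int) : bool := (`|E.1| <= KK)%N && (`|E.2| <= K2)%N.

Lemma cstep_bounded E d E' : boundedE E -> (`|d| <= 3 * `|q|)%N ->
  cstep E d = Some E' -> boundedE E'.
Proof.
move=> bE bd h; have := cstep_sound h.
case: E E' bE h => a b [a' b'] /andP [ba bb] _.
rewrite /mX /addZ2 /= => -[ea eb].
rewrite /boundedE /= /K2 /KK in ba bb *.
have Hq := hpq.
nia.
Qed.

End Carry.


Definition rng (K : nat) : seq int := [seq (i%:Z - K%:Z) | i <- iota 0 (K + K).+1].

Lemma mem_rng x K : (x \in rng K) = (`|x| <= K)%N.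
Proof.
apply/mapP/idP.
  move=> [i]; rewrite mem_iota add0n => /andP[_ hi] ->; lia.
move=> hx; exists (absz (x + K%:Z)).
  rewrite mem_iota add0n; apply/andP; split => //; lia.
lia.
Qed.

Section FinCarry.
Variables (p q : int).
Hypothesis hpq : 1 + `|p| < `|q|.

Definition allb : seq (int*int) := [seq (a, b) | a <- rng (KK q), b <- rng (K2 p q)].
Lemma mem_allb E : (E \in allb) = boundedE p q E.
Proof.
case: E => a b; rewrite /boundedE /=; apply/allpairsP/idP.
  by move=> [[x y] /= [hx hy [-> ->]]]; rewrite -!mem_rng hx hy.
move=> /andP[ha hb]; exists (a, b) => /=; by rewrite !mem_rng.
Qed.

Definition CS : finType := seq_sub allb.
Definition fstep (o : option CS) (d : int) : option CS :=
  if o is Some e then (if cstep p q (val e) d is Some E then insub E else None) else None.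
Definition fstart : option CS := insub (0,0).

Lemma foldl_fstep_None ds : foldl fstep None ds = None.
Proof. by elim: ds. Qed.

Lemma frun_gen (e : CS) ds : all (fun d => `|d| <= 3 * `|q|)%N ds ->
  omap val (foldl fstep (Some e) ds) = runC p q (val e) ds.
Proof.
elim: ds e => [|d ds IH] e //= /andP [hd hds].
case h: (cstep p q (val e) d) => [E|]; last by rewrite foldl_fstep_None.
have bE : boundedE p q E.
  apply: (cstep_bounded hpq _ hd h); by rewrite -mem_allb (valP e).
have inE : E \in allb by rewrite mem_allb.
case: insubP => [u _ uE|]; last by rewrite inE.
rewrite IH //; congr (runC _ _ _ _); exact: uE.
Qed.

Lemma frun ds : all (fun d => `|d| <= 3 * `|q|)%N ds ->
  (omap val (foldl fstep fstart ds) == Some (0,0)) = (Vp p q ds == (0,0)).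
Proof.
move=> h.
have in0 : ((0:int),(0:int)) \in allb by rewrite mem_allb /boundedE /=.
rewrite /fstart; case: insubP => [u _ uE|]; last by rewrite in0.
by rewrite frun_gen //= uE runC_zero'.
Qed.

End FinCarry.

Lemma foldl_pair (S1 S2 A : Type) (f : S1 -> A -> S1) (g : S2 -> A -> S2) s1 s2 w :
  foldl (fun s a => (f s.1 a, g s.2 a)) (s1, s2) w = (foldl f s1 w, foldl g s2 w).
Proof. by elim: w s1 s2 => //= a w IH s1 s2; rewrite IH. Qed.

Lemma foldl_map (S A B : Type) (f : S -> B -> S) (h : A -> B) s w :
  foldl (fun s a => f s (h a)) s w = foldl f s (map h w).
Proof. by elim: w s => //= a w IH s; rewrite IH. Qed.

Section Proj.
Variables (A B S : finType) (s0 : S) (st : S -> B * A -> S).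

Definition pstep (X : {set S}) (a : A) : {set S} :=
  [set s' | [exists s in X, exists b : B, s' == st s (b, a)]].

Lemma pstep_spec w s' :
  (s' \in foldl pstep [set s0] w) <->
  exists u : seq B, size u = size w /\ s' = foldl st s0 (zip u w).
Proof.
elim/last_ind: w s' => [|w a IH] s' /=.
  rewrite in_set1; split => [/eqP ->|[u [hu ->]]]; first by exists [::].
  by case: u hu.
rewrite -cats1 foldl_cat /= inE; split.
  move=> /existsP [s /andP [hs /existsP [b /eqP ->]]].
  have [u [hu ->]] := (IH s).1 hs.
  exists (rcons u b); rewrite size_rcons hu size_cat addn1; split => //.
  by rewrite -cats1 zip_cat // foldl_cat.
move=> [u]; case/lastP: u => [|u b]; first by move=> [/eqP]; rewrite size_cat addn1.
rewrite size_rcons size_cat addn1 => -[[hu] ->].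
rewrite -cats1 zip_cat // foldl_cat /=.
apply/existsP; exists (foldl st s0 (zip u w)); rewrite ((IH _).2) //=.
  by apply/existsP; exists b.
by exists u.
Qed.
End Proj.

Lemma pumping (A : finType) (D : dfa A) (w : seq A) :
  (#|dstate D| <= size w)%N ->
  exists x y z, [/\ w = x ++ y ++ z, (0 < size y)%N &
    forall i, accepts D (x ++ flatten (nseq i y) ++ z) = accepts D w].
Proof.
move=> hw.
pose f (k : 'I_(#|dstate D|).+1) := foldl (@dstep A D) (@dstart A D) (take k w).
have : ~~ injectiveb f.
  apply/injectiveP; move/leq_card; rewrite card_ord; lia.
move=> /injectivePn [i [j ij fij]].
wlog lt_ij : i j ij fij / (i < j)%N.
  move=> W; case: (ltngtP i j) => h; first exact: (W i j ij fij h).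
    by apply: (W j i _ (esym fij)); rewrite // eq_sym.
  by case/eqP: ij; apply/val_inj.
have hj : (j <= size w)%N by move: (ltn_ord j); lia.
exists (take i w), (take (j - i) (drop i w)), (drop j w); split.
- rewrite -{1}(cat_take_drop i w) -{1}(cat_take_drop (j - i) (drop i w)).
  by rewrite drop_drop subnK // ltnW.
- rewrite size_take size_drop; case: ifP; lia.
have ey : foldl (@dstep A D) (f i) (take (j - i) (drop i w)) = f i.
  rewrite {2}fij /f -foldl_cat; congr foldl.
  rewrite -{2}(subnK (ltnW lt_ij)) addnC -takeD //.
move=> k; rewrite /accepts !foldl_cat.
have -> : foldl (@dstep A D) (@dstart A D) (take i w) = f i by [].
have -> : foldl (@dstep A D) (f i) (flatten (nseq k (take (j - i) (drop i w)))) = f i.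
  elim: k => //= k IH; by rewrite foldl_cat ey IH.
rewrite -[in RHS](cat_take_drop i w) -[in RHS](cat_take_drop (j - i) (drop i w)).
by rewrite !foldl_cat -/(f i) ey drop_drop subnK // ltnW.
Qed.


Section DomAut.
Variables (p q : int).
Hypothesis hpq : 1 + `|p| < `|q|.

Local Notation Sg := (Sigma q).

Lemma letv_bound (a : Sg) : (`|letv a| < `|q|)%N.
Proof. have := ltn_ord a; rewrite /letv; lia. Qed.

Lemma q_gt1 : (1 < `|q|)%N.
Proof. move: hpq; lia. Qed.

Definition z0 : Sg := @Ordinal (2 * `|q| - 1) (`|q| - 1) (ltac:(have := q_gt1; lia)).
Lemma letv_z0 : letv z0 = 0.
Proof. rewrite /letv /=; have := q_gt1; lia. Qed.

Lemma psi_pr w : psi p q w = pr p q (poly_of w).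
Proof. by []. Qed.

Lemma sim_psi u w : sim p q (poly_of u) (poly_of w) <-> psi p q u = psi p q w.
Proof. by rewrite !psi_pr sim_pr. Qed.

Definition cmpstep (c : option bool) (ba : Sg * Sg) : option bool :=
  if c is None then
    (if (nat_of_ord ba.1 < ba.2)%N then Some true
     else if (nat_of_ord ba.2 < ba.1)%N then Some false else None)
  else c.

Lemma foldl_cmp_Some b l : foldl cmpstep (Some b) l = Some b.
Proof. by elim: l. Qed.

Lemma foldl_cmp u w : size u = size w ->
  (foldl cmpstep None (zip u w) == Some true) = lex_lt u w.
Proof.
elim: u w => [|b u IH] [|a w] //= [hs].
rewrite /cmpstep /=; case: ltnP => h1.
  by rewrite foldl_cmp_Some.
case: ltnP => h2.
  rewrite foldl_cmp_Some /=; apply/esym/negbTE; apply/andP => -[/eqP ba _].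
  by move: h2; rewrite ba ltnn.
have -> : b = a by apply/val_inj/eqP; rewrite eqn_leq h1 h2.
by rewrite eqxx /= -IH.
Qed.

Lemma map_fst_zip (A B C : Type) (f : A -> C) (u : seq A) (w : seq B) : size u = size w ->
  map (fun x => f x.1) (zip u w) = map f u.
Proof. by elim: u w => [|b u1 IH] [|a w1] //= [hs1]; rewrite IH. Qed.
Lemma map_snd_zip (A B C : Type) (f : B -> C) (u : seq A) (w : seq B) : size u = size w ->
  map (fun x => f x.2) (zip u w) = map f w.
Proof. by elim: u w => [|b u1 IH] [|a w1] //= [hs1]; rewrite IH. Qed.

Definition dg (ba : Sg * Sg) : int := letv ba.1 - letv ba.2.

Definition NS : finType := (option (CS p q) * option bool * bool)%type.
Definition nst (s : NS) (ba : Sg * Sg) : NS :=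
  ((@fstep p q s.1.1 (dg ba), cmpstep s.1.2 ba), letv ba.1 == 0).
Definition ns0 : NS := ((fstart p q, None), false).
Definition nfin (s : NS) : bool :=
  (omap val s.1.1 == Some (0,0)) && ((s.1.2 == Some true) || s.2).

Lemma foldl_const (S A : Type) (g : A -> S) s l :
  foldl (fun _ a => g a) s l = last s (map g l).
Proof. by elim: l s => //= a l IH s; rewrite IH. Qed.

Lemma nrun u w : size u = size w ->
  nfin (foldl nst ns0 (zip u w)) =
  [&& psi p q u == psi p q w & lex_lt u w || last false (map (fun b => letv b == 0) u)].
Proof.
move=> hs.
have E : foldl nst ns0 (zip u w) =
  ((foldl (@fstep p q) (fstart p q) (map dg (zip u w)), foldl cmpstep None (zip u w)),
   last false (map (fun ba : Sg * Sg => letv ba.1 == 0) (zip u w))).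
  rewrite -foldl_const -foldl_map -foldl_pair -foldl_pair; by [].
rewrite /nfin E /= frun //; last first.
  apply/allP => d /mapP [[b a] _ ->]; rewrite /dg /=.
  have := letv_bound b; have := letv_bound a; lia.
rewrite foldl_cmp //.
have -> : map (fun ba : Sg * Sg => letv ba.1 == 0) (zip u w) =
          map (fun b => letv b == 0) u.
  exact: (map_fst_zip (fun b => letv b == 0)).
congr andb.
have -> : map dg (zip u w) = [seq (fun x : Sg*Sg => letv x.1) x + (fun x : Sg*Sg => - letv x.2) x | x <- zip u w] by [].
rewrite Vp_map_add (Vp_map_neg _ _ (fun x : Sg*Sg => letv x.2)) map_fst_zip // map_snd_zip // !psi_Vp.
case: (Vp p q (map (@letv q) u)) (Vp p q (map (@letv q) w)) => [a b] [c d].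
rewrite /addZ2 /negZ2 /=; apply/eqP/eqP => [[h1 h2]|[-> ->]].
  by congr pair; apply/eqP; rewrite -subr_eq0; apply/eqP.
by rewrite !subrr.
Qed.

Lemma notDom u w : size u = size w -> psi p q u = psi p q w ->
  lex_lt u w || last false (map (fun b => letv b == 0) u) -> ~ Dom p q w.
Proof.
move=> hs hp /orP [hl|hz] D.
  apply: (D u); last by rewrite sim_psi.
  by rewrite /llex_lt hs eqxx hl orbT.
case/lastP: u hs hp hz => [|u b] //.
rewrite map_rcons last_rcons size_rcons => hs hp hz.
apply: (D u); first by rewrite /llex_lt -hs ltnSn.
rewrite sim_psi -hp !psi_Vp map_rcons -cats1 (eqP hz).
by rewrite -(Vp_pad p q (map (@letv q) u) 1).
Qed.

Lemma notDom_inv w : ~ Dom p q w -> exists u, [/\ size u = size w, psi p q u = psi p q w &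
  lex_lt u w || last false (map (fun b => letv b == 0) u)].
Proof.
move=> nD.
have [u hu] : exists u, ~ (llex_lt u w -> ~ sim p q (poly_of u) (poly_of w)).
  by apply: not_all_ex_not.
have [hl hsim] : llex_lt u w /\ sim p q (poly_of u) (poly_of w).
  split; apply: NNPP => h; apply: hu => //.
move/sim_psi: hsim => hsim.
move: hl; rewrite /llex_lt => /orP [hlt|/andP [/eqP hs hl]]; last first.
  by exists u; rewrite hs hsim hl.
exists (u ++ nseq (size w - size u) z0); split.
- by rewrite size_cat size_nseq subnKC // ltnW.
- rewrite -hsim !psi_Vp map_cat map_nseq letv_z0 Vp_pad //.
- apply/orP; right.
  rewrite map_cat map_nseq letv_z0 last_cat.
  have -> : (size w - size u = (size w - size u).-1.+1)%N by rewrite prednK // subn_gt0.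
  rewrite /=; elim: (size w - size u).-1 => //=.
Qed.

Definition DomD : dfa Sg :=
  @DFA Sg {set NS} [set ns0] (pstep nst) (fun X => ~~ [exists s in X, nfin s]).

Lemma DomD_ok w : accepts DomD w <-> Dom p q w.
Proof.
rewrite /accepts /=; split.
  move=> /negP h; apply: NNPP => nD; apply: h.
  have [u [hs hp hc]] := notDom_inv nD.
  apply/existsP; exists (foldl nst ns0 (zip u w)); apply/andP; split.
    by apply/pstep_spec; exists u.
  by rewrite nrun // hp eqxx.
move=> D; apply/negP => /existsP [s /andP [hs hf]].
have [u [hu es]] := (pstep_spec _ _ _ _).1 hs.
move: hf; rewrite es nrun // => /andP [/eqP hp hc].
exact: (notDom hu hp hc D).
Qed.

Lemma regular_Dom : regular (Dom p q).
Proof. exists DomD; exact: DomD_ok. Qed.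

End DomAut.


Section Conv.
Variables (A : finType) (m : nat).
Implicit Types (ws : 'I_m -> seq A) (x : seq {ffun 'I_m -> option A}).

Definition tr (i : 'I_m) x : seq (option A) := map (fun c : {ffun 'I_m -> option A} => c i) x.

Fixpoint okSN (l : seq (option A)) : bool :=
  match l with
  | [::] => true
  | Some _ :: l' => okSN l'
  | None :: l' => all (fun o => o == None) l'
  end.

Definition allNone (c : {ffun 'I_m -> option A}) : bool := [forall i, c i == None].

Lemma conv_ext ws ws' : (forall i, ws i = ws' i) -> conv ws = conv ws'.
Proof.
move=> h; rewrite /conv (eq_bigr (fun i => size (ws' i))); last by move=> i _; rewrite h.
by apply: eq_mkseq => k; apply/ffunP => i; rewrite !ffunE h.
Qed.

Lemma size_conv ws : size (conv ws) = (\max_(i < m) size (ws i))%N.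
Proof. by rewrite size_mkseq. Qed.

Lemma size_le_conv ws i : (size (ws i) <= size (conv ws))%N.
Proof. by rewrite size_conv (leq_bigmax i). Qed.

Lemma tr_conv ws i :
  tr i (conv ws) = map Some (ws i) ++ nseq (size (conv ws) - size (ws i)) None.
Proof.
apply: (@eq_from_nth _ None).
  by rewrite /tr size_map size_cat size_map size_nseq subnKC // size_le_conv.
move=> k; rewrite /tr size_map => hk.
rewrite (nth_map [ffun=> None]) // /conv nth_mkseq -?size_conv // ffunE.
rewrite nth_cat size_map onthE; case: ltnP => h //.
by rewrite nth_nseq nth_default ?size_map //; case: ifP.
Qed.

Lemma pmap_SN (s : seq A) k : pmap id (map Some s ++ nseq k None) = s.
Proof.
rewrite pmap_cat; elim: s => [|a s IH] /=; last by rewrite IH.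
by elim: k.
Qed.

Lemma conv_tr ws i : pmap id (tr i (conv ws)) = ws i.
Proof. by rewrite tr_conv pmap_SN. Qed.

Lemma okSN_SN (s : seq A) k : okSN (map Some s ++ nseq k None).
Proof. elim: s => [|a s IH] //=; case: k => //= k; exact/all_pred1_nseq. Qed.

Lemma okSN_dec l : okSN l -> l = map Some (pmap id l) ++ nseq (size l - size (pmap id l)) None.
Proof.
elim: l => [|[a|] l IH] //=.
  by move/IH => {1}->; rewrite subSS.
move=> /all_pred1P -> /=.
rewrite size_nseq; have -> : pmap id (nseq (size l) (@None A)) = [::] by elim: (size l).
by rewrite /= ?subn0.
Qed.

Lemma conv_good ws : (forall i, okSN (tr i (conv ws))) /\ ~~ has allNone (conv ws).
Proof.
split; first by move=> i; rewrite tr_conv okSN_SN.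
apply/hasPn => c /(nthP [ffun=> None]) [k hk <-].
rewrite /allNone; apply/negP => /forallP h.
have : (size (conv ws) <= k)%N.
  rewrite {1}size_conv; apply/bigmax_leqP => i _.
  have := h i; rewrite /conv nth_mkseq -?size_conv // ffunE => /eqP hN.
  by rewrite -onthNE hN.
by rewrite leqNgt hk.
Qed.

Lemma good_conv x : (forall i, okSN (tr i x)) -> ~~ has allNone x ->
  x = conv (fun i => pmap id (tr i x)).
Proof.
move=> hok hn.
have hle i : (size (pmap id (tr i x)) <= size x)%N.
  by rewrite -[X in (_ <= X)%N](size_map (fun c : {ffun 'I_m -> option A} => c i)) size_pmap count_size.
have hsz : size (conv (fun i => pmap id (tr i x))) = size x.
  rewrite size_conv; apply/eqP; rewrite eqn_leq; apply/andP; split.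
    by apply/bigmax_leqP => i _.
  case/lastP E : x hn hok hle => [|x' c] //; rewrite -E => hn hok hle.
  have : ~~ allNone c by apply: contra hn => hc; apply/hasP; exists c; rewrite // E mem_rcons mem_head.
  rewrite /allNone negb_forall => /existsP [i hi].
  apply: (leq_trans _ (leq_bigmax i)).
  have := okSN_dec (hok i); set s := pmap id _ => ed.
  rewrite leqNgt; apply/negP => hlt.
  have : nth None (tr i x) (size x').+1.-1 = c i by rewrite /tr E (nth_map [ffun=> None]) ?size_rcons // nth_rcons ltnn eqxx.
  rewrite ed nth_cat size_map.
  have -> : ((size x').+1.-1 < size s)%N = false.
    by apply/negbTE; rewrite -leqNgt /=; move: hlt; rewrite E size_rcons ltnS.
  by rewrite nth_nseq; case: ifP => _ h; move: hi; rewrite -h.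
apply: (@eq_from_nth _ [ffun=> None]); first by rewrite hsz.
move=> k hk; apply/ffunP => i.
rewrite /conv nth_mkseq -?size_conv ?hsz // ffunE onthE.
have := okSN_dec (hok i); set s := pmap id _ => ed.
have : nth None (tr i x) k = nth [ffun=> None] x k i by rewrite /tr (nth_map [ffun=> None]).
move=> <-; rewrite [in LHS]ed nth_cat size_map; case: ltnP => // hks.
rewrite nth_nseq [RHS]nth_default ?size_map //; by case: ifP.
Qed.

End Conv.


Lemma foldl_ffun (I : finType) (S T : Type) (g : S -> T -> S) (F0 : {ffun I -> S})
   (x : seq {ffun I -> T}) :
  foldl (fun (F : {ffun I -> S}) (c : {ffun I -> T}) => [ffun i => g (F i) (c i)]) F0 x =
  [ffun i => foldl g (F0 i) (map (fun c : {ffun I -> T} => c i) x)].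
Proof.
elim: x F0 => [|c x IH] F0 /=; first by apply/ffunP => i; rewrite ffunE.
by rewrite IH; apply/ffunP => i; rewrite !ffunE.
Qed.

Lemma foldl_or (T : Type) (P : pred T) b x : foldl (fun b c => b || P c) b x = b || has P x.
Proof. by elim: x b => [|c x IH] b /=; rewrite ?orbF // IH orbA. Qed.

Section AddAut.
Variables (p q : int).
Hypothesis hpq : 1 + `|p| < `|q|.

Local Notation Sg := (Sigma q).
Local Notation Col := {ffun 'I_3 -> option Sg}.
Local Notation DD := (DomD p q).

Definition od (o : option Sg) : int := if o is Some a then letv a else 0.
Definition dgc (c : Col) : int := od (c i3_0) + od (c i3_1) - od (c i3_2).

Definition tstep (t : option bool) (o : option Sg) : option bool :=
  match t, o with
  | Some false, Some _ => Some false
  | Some _, None => Some true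
  | _, _ => None
  end.

Definition dstepo (X : dstate DD) (o : option Sg) : dstate DD :=
  if o is Some a then dstep X a else X.

Definition AS : finType :=
  ((option (CS p q) * {ffun 'I_3 -> dstate DD}) * ({ffun 'I_3 -> option bool} * bool))%type.

Definition astep (s : AS) (c : Col) : AS :=
  ((@fstep p q s.1.1 (dgc c), [ffun i => dstepo (s.1.2 i) (c i)]),
   ([ffun i => tstep (s.2.1 i) (c i)], s.2.2 || allNone c)).

Definition astart : AS := ((fstart p q, [ffun _ => dstart DD]), ([ffun _ => Some false], false)).

Definition afin (s : AS) : bool :=
  [&& omap val s.1.1 == Some (0,0), [forall i, dfinal (s.1.2 i)],
      [forall i, s.2.1 i != None] & ~~ s.2.2].

Definition AddD : dfa Col := @DFA Col AS astart astep afin.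

Lemma foldl_dstepo X l : foldl dstepo X l = foldl (@dstep _ DD) X (pmap id l).
Proof. by elim: l X => [|[a|] l IH] X //=. Qed.

Lemma foldl_tstepN l : foldl tstep None l = None.
Proof. by elim: l. Qed.

Lemma foldl_tstepT l : (foldl tstep (Some true) l != None) = all (fun o => o == None) l.
Proof. by elim: l => [|[a|] l IH] //=; rewrite foldl_tstepN. Qed.

Lemma foldl_tstepF l : (foldl tstep (Some false) l != None) = okSN l.
Proof. by elim: l => [|[a|] l IH] //=; rewrite foldl_tstepT. Qed.

Lemma arun_gen (s : AS) x : foldl astep s x =
  ((foldl (@fstep p q) s.1.1 (map dgc x),
    [ffun i => foldl dstepo (s.1.2 i) (tr i x)]),
   ([ffun i => foldl tstep (s.2.1 i) (tr i x)], s.2.2 || has (@allNone _ _) x)).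
Proof.
elim: x s => [|c x IH] [[s1 s2] [s3 s4]] /=.
  by rewrite orbF; congr (_, _, (_, _)); apply/ffunP => i; rewrite ffunE.
rewrite IH /= orbA; congr (_, _, (_, _)); apply/ffunP => i; rewrite !ffunE //.
Qed.

Lemma arun x : foldl astep astart x =
  ((foldl (@fstep p q) (fstart p q) (map dgc x),
    [ffun i => foldl dstepo (dstart DD) (tr i x)]),
   ([ffun i => foldl tstep (Some false) (tr i x)], has (@allNone _ _) x)).
Proof.
rewrite arun_gen /=; congr (_, _, (_, _)); apply/ffunP => i; by rewrite !ffunE.
Qed.

Lemma od_conv (ws : 'I_3 -> seq Sg) i :
  Vp p q (map (fun c : Col => od (c i)) (conv ws)) = psi p q (ws i).
Proof.
have -> : map (fun c : Col => od (c i)) (conv ws) = map od (tr i (conv ws)).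
  by rewrite /tr -map_comp.
rewrite tr_conv map_cat map_nseq -map_comp /= Vp_pad psi_Vp //.
Qed.

Lemma AddD_ok x : accepts AddD x <-> exists ws, add_rel p q ws /\ x = conv ws.
Proof.
have Vdg : forall ws, Vp p q (map dgc (conv ws)) =
    addZ2 (addZ2 (psi p q (ws i3_0)) (psi p q (ws i3_1))) (negZ2 (psi p q (ws i3_2))).
  move=> ws.
  have -> : map dgc (conv ws) = [seq (fun c : Col => od (c i3_0) + od (c i3_1)) c + (fun c : Col => - od (c i3_2)) c | c <- conv ws] by [].
  rewrite Vp_map_add (Vp_map_neg _ _ (fun c : Col => od (c i3_2))).
  by rewrite (Vp_map_add _ _ (fun c : Col => od (c i3_0)) (fun c : Col => od (c i3_1))) !od_conv.
have bnd : forall x, all (fun d => `|d| <= 3 * `|q|)%N (map dgc x).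
  move=> y; apply/allP => d /mapP [c _ ->]; rewrite /dgc.
  have ob : forall o, (`|od o| < `|q|)%N.
    case=> [a|] /=; first exact: (letv_bound hpq).
    by move: hpq; lia.
  have := ob (c i3_0); have := ob (c i3_1); have := ob (c i3_2).
  move: (od (c i3_0)) (od (c i3_1)) (od (c i3_2)) => a0 a1 a2; lia.
have eqv : forall a b c : int*int, (addZ2 (addZ2 a b) (negZ2 c) == (0,0)) = (addZ2 a b == c).
  move=> [a1 a2] [b1 b2] [c1 c2]; rewrite /addZ2 /negZ2 /=.
  apply/eqP/eqP => [[h1 h2]|[<- <-]]; last by rewrite !subrr.
  by congr pair; apply/eqP; rewrite -subr_eq0; apply/eqP.
rewrite /accepts /= arun /afin /=; split.
  move=> /and4P [hc /forallP hd /forallP ht hn].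
  have hx : x = conv (fun i => pmap id (tr i x)).
    by apply: good_conv => // i; rewrite -foldl_tstepF -(ffunE (fun i => foldl tstep (Some false) (tr i x))).
  exists (fun i => pmap id (tr i x)); split => //.
  have hD : forall i, Dom p q (pmap id (tr i x)).
    move=> i; apply/(DomD_ok hpq); rewrite /accepts -foldl_dstepo.
    by have := hd i; rewrite ffunE.
  split; try exact: hD.
  move: hc; rewrite frun // {1}hx Vdg eqv => /eqP; by [].
move=> [ws [[d0 d1 d2 hs] ->]].
have [gok gn] := conv_good ws.
apply/and4P; split => //.
- by rewrite frun // Vdg eqv hs.
- apply/forallP => i; rewrite ffunE foldl_dstepo conv_tr.
  have : Dom p q (ws i).
    have : i = i3_0 \/ i = i3_1 \/ i = i3_2.
      case: i => [[|[|[|k]]] hk]; [left|right;left|right;right|by []]; exact: val_inj.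
    by case=> [->|[->|->]].
  by move/(DomD_ok hpq).
- by apply/forallP => i; rewrite ffunE foldl_tstepF.
Qed.

Lemma add_rec : FA_recognizable (add_rel p q).
Proof. exists AddD; exact: AddD_ok. Qed.

End AddAut.


Section Surj.
Variables (p q : int).
Hypothesis hpq : 1 + `|p| < `|q|.
Local Notation Sg := (Sigma q).

Lemma mkletter (r : int) : (`|r| < `|q|)%N -> exists a : Sg, letv a = r.
Proof.
move=> hr.
have h : (absz (r + (`|q|%:Z - 1))%R < 2 * `|q| - 1)%N by lia.
exists (Ordinal h); rewrite /letv /=; lia.
Qed.

Lemma divtrunc (B : int) : exists s r : int,
  [/\ B = r + q * s, (`|r| < `|q|)%N & (`|s| * `|q| <= `|B|)%N].
Proof.
have q0 : q != 0 by apply/eqP => q0; move: hpq; rewrite q0 normr0; lia.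
have key : forall B : int, 0 <= B -> exists s r : int,
    [/\ B = r + q * s, (`|r| < `|q|)%N & (`|s| * `|q| <= `|B|)%N].
  move=> C hC; exists (C %/ q)%Z, (C %% q)%Z.
  have e := divz_eq C q; have h0 := modz_ge0 C q0; have h1 := ltz_mod C q0.
  move: (C %/ q)%Z (C %% q)%Z e h0 h1 => s r e h0 h1.
  split; [lia|lia|].
  have : 0 <= s * q.
    case: (lerP 0 (s * q)) => // hneg.
    have [s0|sn0] := eqVneq s 0; first by move: hneg; rewrite s0 mul0r ltxx.
    have Hq0 : (0 < `|q|)%N by lia.
    nia.
  nia.
case: (lerP 0 B) => hB; first exact: key.
have [s [r [e hr hs]]] := key (- B) (ltac:(lia)).
exists (- s), (- r); split; [lia|lia|lia].
Qed.

Lemma surj_gen n : forall A B : int, (3 * `|A| + 2 * `|B| <= n)%N ->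
  exists ds : seq Sg, Vp p q (map (@letv q) ds) = (A, B).
Proof.
elim: n => [|n IH] A B hn.
  have -> : A = 0 by lia.
  have -> : B = 0 by lia.
  by exists [::].
have [AB0|ABn] := boolP ((A == 0) && (B == 0)).
  by move: AB0 => /andP [/eqP -> /eqP ->]; exists [::].
have [s [r [e hr hs]]] := divtrunc B.
have [a ha] := mkletter hr.
have hm : (3 * `|s| + 2 * `|(A + p * s)%R| <= n)%N.
  move: ABn; rewrite negb_and => hne.
  have Hq := hpq.
  nia.
have [ds hds] := IH s (A + p * s) hm.
exists (a :: ds); rewrite /= hds ha /mX /addZ2 /= e; congr pair; ring.
Qed.

Lemma surj (A B : int) : exists ds : seq Sg, psi p q ds = (A, B).
Proof.
have [ds h] := surj_gen (A := A) (B := B) (leqnn _).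
by exists ds; rewrite psi_Vp.
Qed.

Definition nS : nat := (2 * `|q| - 1)%N.
Fixpoint code (u : seq Sg) : nat :=
  if u is a :: u' then (nat_of_ord a * nS ^ size u' + code u')%N else 0%N.

Lemma code_lt u : (code u < nS ^ size u)%N.
Proof.
elim: u => [|a u IH] /=; first by rewrite expn0.
rewrite expnS.
have ha : (a < nS)%N by exact: ltn_ord.
move: (nS ^ size u)%N (code u) IH => P c hc.
nia.
Qed.

Lemma lex_code u w : size u = size w -> lex_lt u w -> (code u < code w)%N.
Proof.
elim: u w => [|b u IH] [|a w] //= [hs] /orP [hlt|/andP [/eqP ba hl]].
  have h1 := code_lt u; have h2 := code_lt w; rewrite hs in h1 *.
  move: (nS ^ size w)%N (code u) (code w) h1 h2 => P c1 c2 h1 h2.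
  have : (b + 1 <= a)%N by lia.
  nia.
by rewrite ba hs ltn_add2l; apply: IH.
Qed.

Lemma exists_Dom u : exists w, Dom p q w /\ psi p q w = psi p q u.
Proof.
suff : forall k c u, size u = k -> (code u <= c)%N -> exists w, Dom p q w /\ psi p q w = psi p q u.
  by move=> h; apply: (h _ _ u erefl (leqnn _)).
elim/ltn_ind => k IHk c; elim: c => [|c IHc] v hv hc.
all: case: (classic (Dom p q v)) => hD; first by exists v.
all: have [u' hu'] : exists u' : seq Sg, ~ (llex_lt u' v -> ~ sim p q (poly_of u') (poly_of v))
       by apply: not_all_ex_not.
all: have [hl hsim] : llex_lt u' v /\ sim p q (poly_of u') (poly_of v)
       by split; apply: NNPP => h; apply: hu' => //.
all: move/sim_psi: hsim => hsim.
all: move: hl; rewrite /llex_lt => /orP [hlt|/andP [/eqP hs hl]].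
- have [w [hw ew]] := IHk (size u') (ltac:(by rewrite -hv)) (code u') u' erefl (leqnn _).
  by exists w; rewrite ew hsim.
- have := lex_code hs hl; lia.
- have [w [hw ew]] := IHk (size u') (ltac:(by rewrite -hv)) (code u') u' erefl (leqnn _).
  by exists w; rewrite ew hsim.
- have [w [hw ew]] := IHc u' (ltac:(by rewrite hs)) (ltac:(have := lex_code hs hl; lia)).
  by exists w; rewrite ew hsim.
Qed.

Lemma rep_Dom (A B : int) : exists w, Dom p q w /\ psi p q w = (A, B).
Proof.
have [u hu] := surj A B; have [w [hw ew]] := exists_Dom u.
by exists w; rewrite ew hu.
Qed.

End Surj.


Section NonReg.
Variables (p q : int).
Hypothesis hpq : 1 + `|p| < `|q|.
Local Notation Sg := (Sigma q).
Local Notation mX := (mX p q).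
Local Notation Vp := (Vp p q).

Definition subZ2 a b := addZ2 a (negZ2 b).
Definition sc (c : int) (e : int*int) := (c * e.1, c * e.2).

Lemma mX_sc c e : mX (sc c e) = sc c (mX e).
Proof. by rewrite /mX /sc /=; congr pair; ring. Qed.
Lemma iter_sc m c e : iter m mX (sc c e) = sc c (iter m mX e).
Proof. by elim: m => //= m ->; rewrite mX_sc. Qed.
Lemma iter_comm m l e : iter m mX (iter l mX e) = iter l mX (iter m mX e).
Proof. by rewrite -!iterD addnC. Qed.

Lemma xpow (hc : gcdz p q = 1%N) m : (0 < m)%N ->
  coprimez q (iter m mX (0,1)).1 /\ (q %| (iter m mX (0,1)).2)%Z.
Proof.
case: m => // m _; elim: m => [|m [IH1 IH2]].
  rewrite /= /mX /= !mulr0 subr0; split; [by rewrite coprimezE /= coprimen1 | exact: dvdz0].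
rewrite iterS; move: (iter m.+1 mX (0,1)) IH1 IH2 => [a b] /= h1 /dvdzP [k ->].
rewrite /mX /=; split; last by apply: dvdz_mulr; exact: dvdzz.
have -> : k * q - p * a = k * q + - (p * a) by [].
rewrite /coprimez gcdzMDl gcdzN -/(coprimez q (p * a)) coprimezMr h1 andbT.
by rewrite /coprimez gcdzC hc.
Qed.

Lemma xpow_ne0 (hc : gcdz p q = 1%N) m : (0 < m)%N -> (iter m mX (0,1)).1 != 0.
Proof.
move=> hm; have [h _] := xpow hc hm; apply/eqP => h0; move: h.
rewrite h0 /coprimez gcdz0 => /eqP [] ; move: hpq; lia.
Qed.


Definition GG : nat := (1 + `|p| + `|q|)%N.

Lemma Vp_bound ds : all (fun d => `|d| < `|q|)%N ds ->
  (`|(Vp ds).1| < GG ^ size ds)%N /\ (`|(Vp ds).2| < GG ^ size ds)%N.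
Proof.
elim: ds => [|d ds IH] /=; first by rewrite expn0.
move=> /andP [hd /IH [h1 h2]]; rewrite expnS /GG in h1 h2 *.
move: (Vp ds) h1 h2 => [a b] /= h1 h2.
move: ((1 + `|p| + `|q|) ^ size ds)%N h1 h2 => P h1 h2.
rewrite /mX /addZ2 /=; split; nia.
Qed.

Lemma GG_gt1 : (1 < GG)%N.
Proof. rewrite /GG; move: hpq; lia. Qed.

Lemma long_words (A B : int) N : (GG ^ N <= `|A|)%N \/ (GG ^ N <= `|B|)%N ->
  exists w, [/\ Dom p q w, psi p q w = (A, B) & (N <= size w)%N].
Proof.
move=> hAB; have [w [hw ew]] := rep_Dom hpq A B.
exists w; split => //.
have := @Vp_bound (map (@letv q) w).
rewrite -psi_Vp ew size_map /=.
case; first by apply/allP => d /mapP [a _ ->]; exact: (letv_bound hpq).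
move=> h1 h2.
have : (GG ^ N < GG ^ size w)%N by case: hAB => h; [exact: leq_ltn_trans h h1|exact: leq_ltn_trans h h2].
by rewrite ltn_exp2l ?GG_gt1 // => /ltnW.
Qed.

Lemma pump_alg l m vx vy vz :
  subZ2 (addZ2 vx (iter l mX (addZ2 vy (iter m mX (addZ2 vy (iter m mX vz))))))
        (addZ2 vx (iter l mX (addZ2 vy (iter m mX vz)))) =
  iter m mX (subZ2 (addZ2 vx (iter l mX (addZ2 vy (iter m mX vz)))) (addZ2 vx (iter l mX vz))).
Proof.
rewrite /subZ2 !(iter_mX_add, iter_mX_neg) !(iter_comm m l).
by rewrite /addZ2 /negZ2 /=; congr pair; ring.
Qed.

Lemma nonreg (P : int*int -> Prop)
  (hP : forall m V0 V1 V2, (0 < m)%N -> P V0 -> P V1 -> P V2 ->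
          subZ2 V2 V1 = iter m mX (subZ2 V1 V0) -> V1 = V0)
  (hbig : forall N, exists w, [/\ Dom p q w, P (psi p q w) & (N <= size w)%N]) :
  ~ regular (fun w => Dom p q w /\ P (psi p q w)).
Proof.
move=> [D hD]; have [w [hw hPw hN]] := hbig #|dstate D|.
have acc : accepts D w by apply/hD.
have [x [y [z [ew hy hi]]]] := pumping hN.
have L : forall i, Dom p q (x ++ flatten (nseq i y) ++ z) /\ P (psi p q (x ++ flatten (nseq i y) ++ z)).
  by move=> i; apply/hD; rewrite hi.
have [D0 P0] := L 0%N; have [D1 P1] := L 1%N; have [D2 P2] := L 2%N.
move: D0 P0 D1 P1 D2 P2; rewrite /= !cats0 => D0 P0 D1 P1 D2 P2.
have E : psi p q (x ++ y ++ z) = psi p q (x ++ z).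
  apply: (hP (size y) _ _ (psi p q (x ++ (y ++ y) ++ z))) => //.
  rewrite !psi_Vp !map_cat -catA !Vp_cat !size_map.
  exact: pump_alg.
apply: D1 (x ++ z) _ _; last by rewrite sim_psi E.
by rewrite /llex_lt !size_cat ltn_add2l -{1}(add0n (size z)) ltn_add2r hy.
Qed.

Lemma nonreg_xi (hc : gcdz p q = 1%N) :
  ~ regular (fun w => Dom p q w /\ in_xi (psi p q w)).
Proof.
apply: nonreg.
  move=> m [a0 b0] [a1 b1] [a2 b2] hm; rewrite /in_xi /= => -> -> ->.
  rewrite /subZ2 /addZ2 /negZ2 /= !subr0.
  have -> : (0 : int, b1 - b0) = sc (b1 - b0) (0, 1) by rewrite /sc /= mulr0 mulr1.
  rewrite iter_sc /sc /= => -[h1 _].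
  have : (b1 - b0) * (iter m mX (0, 1)).1 == 0 by rewrite -h1.
  rewrite mulf_eq0 (negbTE (xpow_ne0 hc hm)) orbF subr_eq0 => /eqP ->; by [].
move=> N; have [w [hw ew hs]] := long_words (A := 0) (B := (GG ^ N)%:Z) (N := N) (or_intror (leqnn _)).
by exists w; rewrite ew.
Qed.

Lemma nonreg_eta (hc : gcdz p q = 1%N) :
  ~ regular (fun w => Dom p q w /\ in_eta (psi p q w)).
Proof.
apply: nonreg.
  move=> m [a0 b0] [a1 b1] [a2 b2] hm; rewrite /in_eta /= => -> -> ->.
  rewrite /subZ2 /addZ2 /negZ2 /= !subr0.
  have -> : (a1 - a0, 0 : int) = sc (a1 - a0) (mX (0, 1)) by rewrite /sc /mX /= !mulr0 subr0 mulr1.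
  rewrite iter_sc -iterSr iterS /sc /mX /= => -[_ h2].
  have : (a1 - a0) * (q * (iter m mX (0, 1)).1) == 0 by rewrite -h2.
  rewrite mulf_eq0 mulf_eq0 (negbTE (xpow_ne0 hc hm)) orbF subr_eq0.
  have -> : (q == 0) = false by apply/negbTE/eqP => q0; move: hpq; rewrite q0 normr0; lia.
  by rewrite orbF => /eqP ->.
move=> N; have [w [hw ew hs]] := long_words (A := (GG ^ N)%:Z) (B := 0) (N := N) (or_introl (leqnn _)).
by exists w; rewrite ew.
Qed.

End NonReg.


Section Proj2.
Variables (p q : int).
Local Notation Sg := (Sigma q).
Local Notation Col2 := {ffun 'I_2 -> option Sg}.

Definition diag (a : Sg) : Col2 := [ffun _ => Some a].

Lemma tr_diag (w : seq Sg) i : tr i (map diag w) = map Some w.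
Proof. by rewrite /tr -map_comp; apply: eq_map => a /=; rewrite ffunE. Qed.

Lemma conv_diag (w : seq Sg) : map diag w = conv (fun _ : 'I_2 => w).
Proof.
rewrite {1}(@good_conv _ _ (map diag w)).
- by apply: conv_ext => i; rewrite tr_diag -(cats0 (map Some w)) -(cat0s (map Some w)) -[[::] ++ _]/(map Some [::] ++ _)  /= (pmap_SN w 0).
- by move=> i; rewrite tr_diag -(cats0 (map Some w)) (okSN_SN w 0).
apply/hasPn => c /mapP [a _ ->]; rewrite /allNone negb_forall.
by apply/existsP; exists i2_0; rewrite ffunE.
Qed.

Lemma diag_conv (w : seq Sg) (ws : 'I_2 -> seq Sg) : conv ws = map diag w -> forall i, ws i = w.
Proof.
move=> h i; rewrite -(conv_tr ws i) h tr_diag.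
by rewrite -(cats0 (map Some w)) (pmap_SN w 0).
Qed.

Lemma proj_nonrec (pi : int*int -> int*int) (L : seq Sg -> Prop)
  (hL : forall w, (Dom p q w /\ psi p q w = pi (psi p q w)) <-> L w) :
  ~ regular L -> ~ FA_recognizable (proj_rel p q pi).
Proof.
move=> nL [D hD]; apply: nL.
exists (@DFA Sg (dstate D) (dstart D) (fun s a => dstep s (diag a)) (@dfinal _ D)).
move=> w; rewrite /accepts /= foldl_map -/(accepts D (map diag w)) hD -hL.
split.
  move=> [ws [[h0 h1 h2] e]]; have E := diag_conv (esym e).
  by rewrite !E in h0 h2; split.
move=> [hd hp]; exists (fun _ => w); split; last exact: conv_diag.
by split.
Qed.

End Proj2.

Unset Implicit Arguments.

Theorem theorem1 (p q : int) (hpq : 1 + `|p| < `|q|) :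
  [/\ regular (Dom p q),
      FA_recognizable (add_rel p q) &
      gcdz p q = 1%N ->
      [/\ ~ regular (fun w => Dom p q w /\ in_xi (psi p q w)),
          ~ regular (fun w => Dom p q w /\ in_eta (psi p q w)),
          ~ FA_recognizable (proj_rel p q pi_xi) &
          ~ FA_recognizable (proj_rel p q pi_eta)]].
Proof.
split; [exact: regular_Dom | exact: add_rec | move=> hc].
split; [exact: nonreg_xi | exact: nonreg_eta | |].
- apply: (proj_nonrec (L := fun w => Dom p q w /\ in_xi (psi p q w))); last exact: nonreg_xi.
  move=> w; rewrite /in_xi /pi_xi; case: (psi p q w) => a b /=; split.
    by move=> [hd [->]].
  by move=> [hd ->].
- apply: (proj_nonrec (L := fun w => Dom p q w /\ in_eta (psi p q w))); last exact: nonreg_eta.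
  move=> w; rewrite /in_eta /pi_eta; case: (psi p q w) => a b /=; split.
    by move=> [hd [->]].
  by move=> [hd ->].
Qed.
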